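(* For any fitness graph $\mathcal{G}=(G,(m,r))$ and any seed sets $S\subseteq S'\subseteq V$, we have $\operatorname{fp}_{\mathcal{G}}(S)\le\operatorname{fp}_{\mathcal{G}}(S')$.
   Context: A fitness graph is $\mathcal{G}=(G,(m,r))$ where $G=(V,E,w)$ is a strongly connected directed graph, $w(u,\cdot)$ is a probability distribution over out-neighbours of $u$, and $r,m\colon V\to(0,\infty)$ are resident and mutant fitness functions. For a configuration (set of mutants) $X\subseteq V$, $f_X(u)=m(u)$ if $u\in X$, else $r(u)$. The Heterogeneous Moran process starts at $\mathcal{X}_0=S$; from $\mathcal{X}_t=X$ it picks $u$ with probability $f_X(u)/\sum_v f_X(v)$, then $v$ with probability $w(u,v)$, and $v$ takes the type of $u$. $\operatorname{fp}_{\mathcal{G}}(S)$ is the probability that the process eventually reaches $V$. *)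

(* Defs.v *)
From HB Require Import structures.
From mathcomp Require Import all_boot all_order all_algebra.
From mathcomp Require Import all_classical all_reals all_analysis.
Set Implicit Arguments. Unset Strict Implicit. Unset Printing Implicit Defensive.
Import Order.TTheory GRing.Theory Num.Theory.
Import numFieldNormedType.Exports.
Local Open Scope ring_scope.

Section Moran.
Variables (R : realType) (V : finType).

(* A fitness graph: directed graph E on V, weights w, fitnesses m (mutant), r (resident). *)
Definition fitness_graph (E : rel V) (w : V -> V -> R) (m r : V -> R) : Prop :=
  (forall u v, connect E u v)
  /\ (forall u v, 0 <= w u v)
  /\ (forall u, \sum_(v : V) w u v = 1)
  /\ (forall u v, w u v != 0 -> E u v)
  /\ (forall u, 0 < m u) /\ (forall u, 0 < r u).

(* fitness of u in configuration X (set of mutants) *)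
Definition fit (m r : V -> R) (X : {set V}) (u : V) : R :=
  if u \in X then m u else r u.

Definition moran_next (X : {set V}) (u v : V) : {set V} :=
  if u \in X then v |: X else X :\ v.

Definition moran_trans (w : V -> V -> R) (m r : V -> R) (X Y : {set V}) : R :=
  \sum_(u : V) \sum_(v : V)
     (fit m r X u / \sum_(x : V) fit m r X x) * w u v * (moran_next X u v == Y)%:R.

Fixpoint moran_dist (w : V -> V -> R) (m r : V -> R) (S : {set V}) (t : nat)
  : {set V} -> R :=
  match t with
  | 0 => fun Y => (Y == S)%:R
  | t'.+1 => fun Y => \sum_(X : {set V}) moran_dist w m r S t' X * moran_trans w m r X Y
  end.

(* fixation probability: probability of eventually reaching V.  Since V is
   absorbing, {reach V} is the increasing union of the events {X_t = V}, so its
   probability is the limit of P(X_t = V). *)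
Definition fp (w : V -> V -> R) (m r : V -> R) (S : {set V}) : R :=
  limn (fun t => moran_dist w m r S t [set: V]).

End Moran.

(* Main.v *)
Require Import Defs.
From HB Require Import structures.
From mathcomp Require Import all_boot all_order all_algebra.
From mathcomp Require Import all_classical all_reals all_analysis.
From mathcomp Require Import ring lra.
Import Order.TTheory GRing.Theory Num.Theory.
Import numFieldNormedType.Exports.
Local Open Scope ring_scope.

Section Proof.
Variables (R : realType) (V : finType) (w : V -> V -> R) (m r : V -> R).
Hypotheses (w0 : forall u v, 0 <= w u v) (w1 : forall u, \sum_(v : V) w u v = 1)
  (mpos : forall u, 0 < m u) (rpos : forall u, 0 < r u).
Variable v0 : V.

Definition FF (X : {set V}) := \sum_(x : V) fit m r X x.

Lemma fit_gt0 X u : 0 < fit m r X u.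
Proof. by rewrite /fit; case: ifP. Qed.

Lemma FF_gt0 X : 0 < FF X.
Proof.
rewrite /FF (bigD1 v0) //=.
have h1 := fit_gt0 X v0.
have h2 : 0 <= \sum_(i | i != v0) fit m r X i.
  by apply: sumr_ge0 => i _; exact: ltW (fit_gt0 _ _).
lra.
Qed.

Definition Pf (g : {set V} -> R) X :=
  \sum_(u : V) \sum_(v : V) (fit m r X u / FF X) * w u v * g (moran_next X u v).

Lemma Pf_trans g X : \sum_(Y : {set V}) moran_trans w m r X Y * g Y = Pf g X.
Proof.
rewrite /moran_trans -/(FF X) /Pf.
under eq_bigr => Y _ do rewrite mulr_suml.
under eq_bigr => Y _ do under eq_bigr => u _ do rewrite mulr_suml.
rewrite exchange_big; apply: eq_bigr => u _; rewrite exchange_big.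
apply: eq_bigr => v _.
rewrite (bigD1 (moran_next X u v)) //= eqxx mulr1 [X in _ + X]big1 ?addr0 //.
by move=> Y hY; rewrite eq_sym (negbTE hY) mulr0 mul0r.
Qed.

Lemma distS X t Z : moran_dist w m r X t.+1 Z =
  \sum_(Y : {set V}) moran_dist w m r X t Y * moran_trans w m r Y Z.
Proof. by []. Qed.

Lemma dist_back X t Z : moran_dist w m r X t.+1 Z =
  \sum_(Y : {set V}) moran_trans w m r X Y * moran_dist w m r Y t Z.
Proof.
elim: t Z => [|t IH] Z.
  rewrite distS (bigD1 X) //= eqxx mul1r [X in _ + X]big1 ?addr0; last first.
    by move=> Y /negbTE ->; rewrite mul0r.
  rewrite (bigD1 Z) //= eqxx mulr1 [X in _ + X]big1 ?addr0 //.
  by move=> Y hY; rewrite eq_sym (negbTE hY) mulr0.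
rewrite distS.
under eq_bigr => W _ do rewrite IH mulr_suml.
rewrite exchange_big; apply: eq_bigr => Y _.
rewrite distS mulr_sumr; apply: eq_bigr => W _; by rewrite mulrA.
Qed.

Definition h t X := moran_dist w m r X t [set: V].

Lemma hS t X : h t.+1 X = Pf (h t) X.
Proof. by rewrite /h dist_back Pf_trans. Qed.

Lemma Pf_le g1 g2 X : (forall Y, g1 Y <= g2 Y) -> Pf g1 X <= Pf g2 X.
Proof.
move=> H; apply: ler_sum => u _; apply: ler_sum => v _; apply: ler_wpM2l => //.
apply: mulr_ge0 => //; apply: divr_ge0; apply: ltW; [exact: fit_gt0|exact: FF_gt0].
Qed.

Lemma Pf_cst c X : Pf (fun _ => c) X = c.
Proof.
rewrite /Pf.
under eq_bigr => u _ do rewrite -mulr_suml -mulr_sumr w1 mulr1.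
rewrite -mulr_suml -mulr_suml -/(FF X) mulfV ?mul1r //.
by apply: lt0r_neq0; exact: FF_gt0.
Qed.

Lemma Pf_setT g : Pf g [set: V] = g [set: V].
Proof.
rewrite -[RHS](Pf_cst (g [set: V]) [set: V]); apply: eq_bigr => u _; apply: eq_bigr => v _.
by rewrite /moran_next finset.in_setT finset.setUT.
Qed.

Lemma h0 X : h 0 X = ([set: V] == X)%:R.
Proof. by []. Qed.

Lemma h_setT t : h t [set: V] = 1.
Proof. elim: t => [|t IH]; first by rewrite h0 eqxx. by rewrite hS Pf_setT. Qed.

Lemma h_ge0 t X : 0 <= h t X.
Proof.
elim: t X => [|t IH] X; first by rewrite h0 ler0n.
by rewrite hS -(Pf_cst 0 X); apply: Pf_le.
Qed.

Lemma h_le1 t X : h t X <= 1.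
Proof.
elim: t X => [|t IH] X; first by rewrite h0; case: ([set: V] == X).
by rewrite hS -(Pf_cst 1 X); apply: Pf_le.
Qed.

Lemma h_incr t X : h t X <= h t.+1 X.
Proof.
elim: t X => [|t IH] X.
  rewrite h0; case: eqVneq => [<-|_]; first by rewrite h_setT.
  exact: h_ge0.
by rewrite (hS t) (hS t.+1); apply: Pf_le.
Qed.

Lemma h_nd X : nondecreasing_seq (fun t => h t X).
Proof. by apply/nondecreasing_seqP => t; exact: h_incr. Qed.

Lemma cvg_h X : cvgn (fun t => h t X).
Proof.
apply/cvg_ex; eexists; apply: nondecreasing_cvgn; first exact: h_nd.
by exists 1 => y [t _ <-]; exact: h_le1.
Qed.

Definition hP X := limn (fun t => h t X).

Lemma h_le_hP t X : h t X <= hP X.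
Proof. exact: (nondecreasing_cvgn_le (h_nd X) (cvg_h X)). Qed.

Lemma hP_ge0 X : 0 <= hP X.
Proof. exact: le_trans (h_ge0 0 X) (h_le_hP 0 X). Qed.

Lemma hP_setT : hP [set: V] = 1.
Proof.
rewrite /hP.
have -> : (fun t => h t [set: V]) = (fun=> 1) by apply/funext => t; exact: h_setT.
exact: lim_cst.
Qed.

Lemma cvg_sum_fin (I : finType) (u : I -> nat -> R) (l : I -> R) :
  (forall i, (u i @ \oo --> l i)%classic) ->
  ((fun t => \sum_(i : I) u i t) @ \oo --> \sum_(i : I) l i)%classic.
Proof.
move=> H.
have : forall s : seq I, ((fun t => \sum_(i <- s) u i t) @ \oo --> \sum_(i <- s) l i)%classic.
  elim => [|i s IH].
    under eq_fun do rewrite big_nil; rewrite big_nil; exact: cvg_cst.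
  under eq_fun do rewrite big_cons; rewrite big_cons.
  exact: cvgD.
by move=> /(_ (index_enum I)).
Qed.

Lemma Pf_hP X : Pf hP X = hP X.
Proof.
have c1 : ((fun t => Pf (h t) X) @ \oo --> Pf hP X)%classic.
  apply: cvg_sum_fin => u; apply: cvg_sum_fin => v.
  apply: cvgM; first exact: cvg_cst.
  exact: cvg_h.
have e : (fun t => Pf (h t) X) = (fun t => h t.+1 X).
  by apply/funext => t; rewrite hS.
have c2 : ((fun t => h t.+1 X) @ \oo --> Pf hP X)%classic by rewrite -e.
have hs : hausdorff_space R by exact: Rhausdorff.
rewrite -(cvg_lim hs c2).
apply: (cvg_lim hs).
have := cvg_shiftS (fun t => h t X) (nbhs (hP X)). move=> /= ->.
exact: cvg_h.
Qed.

Definition KK := \sum_(x : V) (m x + r x).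
Definition oth (X : {set V}) u := if u \in X then r u else m u.

Lemma KK_gt0 : 0 < KK.
Proof.
rewrite /KK (bigD1 v0) //=.
have h1 := mpos v0; have h1' := rpos v0.
have h2 : 0 <= \sum_(i | i != v0) (m i + r i).
  by apply: sumr_ge0 => i _; apply: addr_ge0; apply: ltW.
lra.
Qed.

Definition Qf (g : {set V} -> R) X :=
  \sum_(u : V) \sum_(v : V)
    w u v * (oth X u / KK * g X + fit m r X u / KK * g (moran_next X u v)).

Lemma QP g X : Qf g X = g X + FF X / KK * (Pf g X - g X).
Proof.
have e1 : \sum_(u : V) oth X u = KK - FF X.
  apply/eqP; rewrite eq_sym subr_eq /KK /FF -big_split /=; apply/eqP.
  by apply: eq_bigr => u _; rewrite /oth /fit; case: ifP => _; rewrite addrC.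
have e2 : \sum_(u : V) \sum_(v : V) w u v * (fit m r X u / KK * g (moran_next X u v))
    = FF X / KK * Pf g X.
  rewrite /Pf mulr_sumr; apply: eq_bigr => u _; rewrite mulr_sumr.
  apply: eq_bigr => v _.
  have := FF_gt0 X; have := KK_gt0 => hK hF.
  field; apply/andP; split; exact: lt0r_neq0.
rewrite /Qf.
under eq_bigr => u _ do
  rewrite (eq_bigr _ (fun v _ => mulrDr _ _ _)) big_split /= -mulr_suml w1 mul1r.
rewrite big_split /= e2 -mulr_suml -mulr_suml e1.
have := KK_gt0 => hK.
field; exact: lt0r_neq0.
Qed.

Lemma oth_gt0 X u : 0 < oth X u.
Proof. by rewrite /oth; case: ifP. Qed.

Lemma Qf_le g1 g2 X : (forall Y, g1 Y <= g2 Y) -> Qf g1 X <= Qf g2 X.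
Proof.
move=> H; apply: ler_sum => u _; apply: ler_sum => v _; apply: ler_wpM2l => //.
have hK := KK_gt0.
apply: lerD; apply: ler_wpM2l => //; apply: divr_ge0; apply: ltW => //.
  exact: oth_gt0.
exact: fit_gt0.
Qed.

Lemma Qf_mono (g : {set V} -> R) (X Y : {set V}) :
  (forall A B : {set V}, A \subset B -> g A <= g B) ->
  X \subset Y -> Qf g X <= Qf g Y.
Proof.
move=> gm XY; apply: ler_sum => u _; apply: ler_sum => v _; apply: ler_wpM2l => //.
have hK := KK_gt0.
have hm : 0 <= m u / KK by apply: divr_ge0; apply: ltW.
have hr : 0 <= r u / KK by apply: divr_ge0; apply: ltW.
rewrite /oth /fit /moran_next.
case hX: (u \in X); case hY: (u \in Y).
- apply: lerD; apply: ler_wpM2l => //; apply: gm => //; exact: finset.setUS.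
- by move/fintype.subsetP: XY => /(_ u hX); rewrite hY.
- rewrite addrC; apply: lerD; apply: ler_wpM2l => //; apply: gm.
    exact: fintype.subset_trans (finset.subsetDl _ _) XY.
  exact: fintype.subset_trans XY (finset.subsetUr _ _).
- apply: lerD; apply: ler_wpM2l => //; apply: gm => //; exact: finset.setSD.
Qed.

Definition G (X : {set V}) := hP (Order.arg_min [set: V] (fun Y : {set V} => X \subset Y) hP).

Lemma Gspec (X : {set V}) : exists2 Y : {set V}, X \subset Y &
  (G X = hP Y /\ forall Z : {set V}, X \subset Z -> hP Y <= hP Z).
Proof.
rewrite /G; case: arg_minP => [|Y XY mn]; first exact: finset.subsetT.
by exists Y.
Qed.

Lemma G_le_hP X : G X <= hP X.
Proof. by have [Y _ [-> mn]] := Gspec X; apply: mn. Qed.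

Lemma G_mono (X X' : {set V}) : X \subset X' -> G X <= G X'.
Proof.
move=> XX; have [Y' XY' [-> _]] := Gspec X'.
have [Y _ [-> mn]] := Gspec X; apply: mn; exact: fintype.subset_trans XY'.
Qed.

Lemma G_setT : G [set: V] = 1.
Proof.
have [Y TY [-> _]] := Gspec [set: V].
by move: TY; rewrite finset.subTset => /eqP ->; exact: hP_setT.
Qed.

Lemma G_ge0 X : 0 <= G X.
Proof. by have [Y _ [-> _]] := Gspec X; exact: hP_ge0. Qed.

Lemma Pf_G X : Pf G X <= G X.
Proof.
have hQ : Qf G X <= G X.
  have [Y XY [-> mn]] := Gspec X.
  apply: le_trans (@Qf_mono G _ _ _ XY) _; first exact: G_mono.
  apply: le_trans (@Qf_le G hP Y G_le_hP) _.
  by rewrite QP Pf_hP subrr mulr0 addr0.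
move: hQ; rewrite QP => hQ.
have hc : 0 < FF X / KK by apply: divr_gt0; [exact: FF_gt0|exact: KK_gt0].
have : FF X / KK * (Pf G X - G X) <= 0 by lra.
rewrite pmulr_rle0 // subr_le0; exact.
Qed.

Lemma h_le_G t X : h t X <= G X.
Proof.
elim: t X => [|t IH] X.
  rewrite h0; case: eqVneq => [<-|_]; first by rewrite G_setT.
  exact: G_ge0.
rewrite hS; apply: le_trans (Pf_G X); exact: Pf_le.
Qed.

Lemma hP_mono (X X' : {set V}) : X \subset X' -> hP X <= hP X'.
Proof.
move=> XX.
have h1 : hP X <= G X.
  apply: limr_le; first exact: cvg_h.
  apply: nearW => t; exact: h_le_G.
exact: le_trans h1 (le_trans (@G_mono _ _ XX) (G_le_hP X')).
Qed.

End Proof.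

Theorem corollary2 (R : realType) (V : finType) (E : rel V) (w : V -> V -> R)
    (m r : V -> R) (S S' : {set V}) :
  fitness_graph E w m r -> S \subset S' -> fp w m r S <= fp w m r S'.
Proof.
move=> [_ [w0 [w1 [_ [mpos rpos]]]]] SS.
case: (pickP (@predT V)) => [v0 _|none].
  have H := @hP_mono R V w m r w0 w1 mpos rpos v0 S S' SS.
  exact H.
have -> : S = S'.
  apply/setP => x; have := none x; by rewrite /=.
exact: lexx.
Qed.
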